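(* Let $N\ge 2$ and $T\ge 1$ be integers, let $a_1,\ldots,a_N$ be real numbers with $a_1+\cdots+a_N=1$, and let $\mu_1,\ldots,\mu_T$ be real numbers. Let $J$ be the $((N-1)T+1)\times((N-1)T+1)$ real matrix defined as follows (with $e_k$ denoting the $k$-th standard basis row vector of length $(N-1)T+1$): - for $i=1,\ldots,(N-2)T+1$, the $i$-th row of $J$ is $e_{i+T}$; - for $m=1,\ldots,T$, the $((N-2)T+1+m)$-th row of $J$ is $r_m$, where $r_0:=e_{(N-1)T+1}$ and recursively $$r_m=\mu_m\Big(a_1\, r_{m-1}+\sum_{l=2}^{N} a_l\, e_{(N-l)T+m}\Big),\qquad m=1,\ldots,T.$$ Then the characteristic polynomial $\det(\lambda I-J)$ of $J$ equals $$p(\lambda)=\lambda^{(N-1)T+1}-(\mu_1\cdots\mu_T)\,\big(a_1\lambda^{N-1}+a_2\lambda^{N-2}+\cdots+a_{N-1}\lambda+a_N\big)^{T}.$$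
   Context: Motivation/setting: for a $C^1$ map $f:\mathbb{R}\to\mathbb{R}$ with a $T$-cycle $x_0^*,\ldots,x_{T-1}^*$ and the delayed feedback control $x(k+1)=f(x(k))+u(k)$, $u(k)=(a_1-1)f(x(k))+a_2f(x(k-T))+\cdots+a_Nf(x(k-(N-1)T))$, define $G:\mathbb{R}^{(N-1)T+1}\to\mathbb{R}^{(N-1)T+1}$ by $G(x_1,\ldots,x_{(N-1)T+1})=(x_2,\ldots,x_{(N-1)T+1},\,a_1f(x_{(N-1)T+1})+a_2f(x_{(N-2)T+1})+\cdots+a_Nf(x_1))$ and $F=G^T$. The matrix $J$ above is the Jacobian of $F$ at the point $(x_0^*,\ldots,x^*_{(N-1)T})$ (indices mod $T$), with $\mu_j$ the derivatives of $f$ along the cycle; the statement concerns the explicitly defined matrix for arbitrary real $\mu_j$. *)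

(* Defs.v *)
From HB Require Import structures.
From mathcomp Require Import all_boot all_order all_algebra.
Set Implicit Arguments. Unset Strict Implicit. Unset Printing Implicit Defensive.
Import Order.TTheory GRing.Theory Num.Theory.
Local Open Scope ring_scope.

(* Dimension (N-1)T+1.  Indices of matrices/vectors are 0-based here:
   paper index k (1-based) corresponds to Rocq index k-1.
   Sequences a_1..a_N and mu_1..mu_T are given as functions nat -> R,
   used only at the (1-based) indices 1..N resp. 1..T. *)
Definition dimJ (N T : nat) : nat := ((N - 1) * T).+1.

Definition ebas (n k : nat) {R : ringType} : 'rV[R]_n :=
  \row_(j < n) (if (j == k :> nat) then 1 else 0).

Fixpoint rvec {R : ringType} (N T : nat) (a mu : nat -> R) (m : nat)
  : 'rV[R]_(dimJ N T) :=
  match m with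
  | 0 => ebas (dimJ N T) ((N - 1) * T)
  | m'.+1 => mu m *: (a 1%N *: rvec N T a mu m'
              + \sum_(2 <= l < N.+1) a l *: ebas (dimJ N T) ((N - l) * T + m - 1))
  end.

Definition Jmat {R : ringType} (N T : nat) (a mu : nat -> R)
  : 'M[R]_(dimJ N T) :=
  \matrix_(i < dimJ N T)
     (if (i <= (N - 2) * T)%N then ebas (dimJ N T) (i + T)
      else rvec N T a mu (i - (N - 2) * T)%N).

(* Main.v *)
Require Import Defs.
From HB Require Import structures.
From mathcomp Require Import all_boot all_order all_algebra.
From mathcomp Require Import ring.
Set Implicit Arguments. Unset Strict Implicit. Unset Printing Implicit Defensive.
Import GRing.Theory Num.Theory.
Local Open Scope ring_scope.

Section Shape.
Variable R : comNzRingType.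

Lemma shape_k (T k : nat) (K : 'M[R]_(k + T)) :
 (forall i j : 'I_(k+T), (i < k)%N -> K i j = - ((j == (i + T)%N :> nat)%:R)) ->
 \det K = (-1) ^+ (k * T.+1) *
   \det (\matrix_(i < T, j < T) K (rshift k i) (widen_ord (leq_addl k T) j)).
Proof.
elim: k K => [|k IH] K hK.
  rewrite mul0n expr0 mul1r; congr (\det _); apply/matrixP => i j; rewrite mxE.
  by congr (K _ _); apply/val_inj.
pose i0 : 'I_(k.+1 + T) := Ordinal (ltn0Sn (k+T)).
have hT : (T < k.+1 + T)%N by rewrite addSn ltnS leq_addl.
pose jT : 'I_(k.+1 + T) := Ordinal hT.
rewrite (expand_det_row _ i0) (bigD1 jT) //= big1 ?addr0; last first.
  move=> j /negbTE hj; rewrite hK // add0n.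
  have -> : (j == T :> nat) = false by apply/negbTE; apply: contraFN hj => /eqP h; apply/eqP/val_inj.
  by rewrite oppr0 mul0r.
rewrite hK // add0n eqxx /cofactor add0n.
have := IH (row' i0 (col' jT K)).
move=> ->; last first.
  have b0 : forall x, bump 0 x = x.+1 by [].
  move=> i j hi; rewrite !mxE; rewrite hK /=; last by rewrite b0.
  rewrite b0 /bump.
  case: (ltnP j T) => hj.
    rewrite add0n.
    have -> : (j == (i + T)%N :> nat) = false.
      by apply/negbTE; rewrite neq_ltn (leq_trans hj) // leq_addl.
    have -> : (j == (i.+1 + T)%N :> nat) = false.
      by apply/negbTE; rewrite neq_ltn (leq_trans hj) // leq_addl.
    by [].
  by rewrite add1n addSn eqSS.
rewrite mulr1n mulrA -exprS mulrA -exprD.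
congr (_ ^+ _ * \det _).
apply/matrixP => i j; rewrite !mxE; congr (K _ _); apply/val_inj => /=.
  by [].
by rewrite /bump leqNgt ltn_ord.
Qed.

Lemma botr_lt T n (hT : (T <= n)%N) (i : 'I_T) : (n - T + i < n)%N.
Proof. by rewrite -ltn_subRL subKn // ltn_ord. Qed.
Definition botr T n (hT : (T <= n)%N) (i : 'I_T) : 'I_n := Ordinal (botr_lt hT i).

Lemma shape_n (T n : nat) (K : 'M[R]_n) (hT : (T <= n)%N) :
 (forall i j : 'I_n, (i < (n - T)%N)%N -> K i j = - ((j == (i + T)%N :> nat)%:R)) ->
 \det K = (-1) ^+ ((n - T) * T.+1)%N *
   \det (\matrix_(i < T, j < T) K (botr hT i) (widen_ord hT j)).
Proof.
have [k ek] : exists k, n = (k + T)%N by exists (n - T)%N; rewrite subnK.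
subst n => hK; rewrite shape_k; last by move=> i j hi; apply: hK; rewrite addnK.
rewrite addnK; congr (_ * \det _); apply/matrixP => i j; rewrite !mxE.
by congr (K _ _); apply/val_inj => //=; rewrite addnK.
Qed.
End Shape.
Section Cyc.
Variable R : comNzRingType.

Definition cycmx (t : nat) (d s : nat -> R) : 'M[R]_t.+1 :=
  \matrix_(i < t.+1, j < t.+1)
    ((if (j == (i.+1 %% t.+1)%N :> nat) then s i else 0) + (if j == i :> nat then d i else 0)).

Lemma det_cyc (t : nat) (d s : nat -> R) :
 \det (cycmx t d s) = \prod_(i < t.+1) d i + (-1)^+t * \prod_(i < t.+1) s i.
Proof.
case: t => [|t].
  by rewrite det_mx11 !mxE !big_ord1 /= expr0 mul1r addrC.
rewrite (expand_det_col _ ord0) (bigD1 ord0) //= (bigD1 ord_max) //= big1; last first.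
  move=> i /andP [hi0 him]; rewrite !mxE /=.
  have -> : (0 == (i.+1 %% t.+2)%N :> nat) = false.
    case: (ltnP i.+1 t.+2) => h.
      by rewrite modn_small.
    have ei : (i : nat) = t.+1 by apply/eqP; rewrite eqn_leq -ltnS ltn_ord.
    by move: him; rewrite (_ : i = ord_max) ?eqxx //; apply/val_inj.
  have -> : (0 == i :> nat) = false by apply/negbTE; apply: contra hi0 => /eqP h; apply/eqP/val_inj.
  by rewrite add0r mul0r.
rewrite addr0 !mxE /= modnn eqxx add0r addr0.
congr (_ + _).
  rewrite big_ord_recl; congr (_ * _).
  rewrite /cofactor /= expr0 mul1r -det_tr det_trig; last first.
    apply/is_trig_mxP => i j hij; rewrite !mxE /=.
    have b0 : forall x, bump 0 x = x.+1 by [].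
    rewrite !b0.
    have -> : (i.+1 == (j.+2 %% t.+2)%N :> nat) = false.
      case: (ltnP j.+2 t.+2) => h; first by rewrite modn_small // ltn_eqF // ltnS ltnW.
      have -> : j.+2 = t.+2 by apply/eqP; rewrite eqn_leq h andbT ltnS ltn_ord.
      by rewrite modnn.
    by rewrite eqSS ltn_eqF // add0r.
  apply: eq_bigr => i _; rewrite !mxE /=.
  have b0 : forall x, bump 0 x = x.+1 by [].
  rewrite !b0 eqxx.
  have -> : (i.+1 == (i.+2 %% t.+2)%N :> nat) = false.
    case: (ltnP i.+2 t.+2) => h; first by rewrite modn_small // eqSS ltn_eqF.
    have -> : i.+2 = t.+2 by apply/eqP; rewrite eqn_leq h andbT ltnS ltn_ord.
    by rewrite modnn.
  by rewrite add0r.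
rewrite big_ord_recr /= mulrCA; congr (_ * _).
rewrite /cofactor /= addn0 /=; first by [].
rewrite mulrC; congr (_ * _).
rewrite det_trig; last first.
  apply/is_trig_mxP => i j hij; rewrite !mxE /=.
  have b0 : forall x, bump 0 x = x.+1 by [].
  have bm : forall x : 'I_t.+1, bump t.+1 x = x by move=> x; rewrite /bump leqNgt ltn_ord.
  have hi : (i < t.+1)%N := ltn_ord i.
  have bm' : bump t.+1 i = i by rewrite /bump leqNgt hi.
  rewrite bm' b0 modn_small; last by [].
  by rewrite eqSS (gtn_eqF hij) (gtn_eqF (ltn_trans hij (ltnSn j))) addr0.
apply: eq_bigr => i _; rewrite !mxE /=.
have b0 : forall x, bump 0 x = x.+1 by [].
have bm : forall x : 'I_t.+1, bump t.+1 x = x by move=> x; rewrite /bump leqNgt ltn_ord.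
have hi : (i < t.+1)%N := ltn_ord i.
have bm' : bump t.+1 i = i by rewrite /bump leqNgt hi.
  rewrite bm' b0 modn_small; last by [].
by rewrite eqxx (gtn_eqF (ltnSn i)) addr0.
Qed.
End Cyc.
Section Main.
Variable R : comNzRingType.
Variables (N' t : nat) (a mu : nat -> R).
Local Notation N := N'.+2.
Local Notation T := t.+1.
Local Notation n := (dimJ N T).
Local Notation s := (N' * T)%N.
Local Notation RX := {poly R}.

Definition uf (k j : nat) : RX :=
  if ((j <= k) && (k %% T == j %% T))%N then 'X^((k - j) %/ T)%N else 0.
Definition Umx : 'M[RX]_n := \matrix_(k, j) uf k j.
Definition cL (i : nat) : RX := (mu (i - s) * a 1)%:P.
Definition Lmx : 'M[RX]_n :=
  \matrix_(i, k) ((i == k :> nat)%:R - (if ((s < i) && (k.+1 == i))%N then cL i else 0)).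

Lemma det_Umx : \det Umx = 1.
Proof.
rewrite det_trig; last first.
  by apply/is_trig_mxP => i j hij; rewrite mxE /uf leqNgt hij.
by rewrite big1 // => i _; rewrite mxE /uf leqnn eqxx subnn div0n expr0.
Qed.

Lemma det_Lmx : \det Lmx = 1.
Proof.
rewrite det_trig; last first.
  apply/is_trig_mxP => i j hij; rewrite mxE (ltn_eqF hij).
  have -> : (j.+1 == i :> nat) = false by apply/negbTE; rewrite neq_ltn ltnS (ltnW hij) orbT.
  by rewrite andbF subr0.
rewrite big1 // => i _; rewrite mxE eqxx.
by rewrite (gtn_eqF (ltnSn i)) andbF subr0.
Qed.

Lemma ebas_mul p (A : 'M[RX]_(n, p)) k (hk : (k < n)%N) j :
  (ebas n k *m A) 0 j = A (Ordinal hk) j.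
Proof.
rewrite mxE (bigD1 (Ordinal hk)) //= big1 ?addr0; first by rewrite mxE eqxx mul1r.
move=> i hi; rewrite mxE.
have -> : (i == k :> nat) = false.
  by apply/negbTE; apply: contra hi => /eqP h; apply/eqP/val_inj.
by rewrite mul0r.
Qed.

Lemma map_ebas k : map_mx (@polyC R) (ebas n k) = ebas n k.
Proof. by apply/matrixP => i j; rewrite !mxE; case: ifP. Qed.


Lemma uf_top (i j : nat) : 'X * uf i j - uf (i + T) j = - ((j == i + T)%N%:R).
Proof.
rewrite /uf modnDr.
case: (boolP ((j <= i) && (i %% T == j %% T))%N) => [/andP [hji hm] | hA].
  rewrite (leq_trans hji (leq_addr _ _)) hm /=.
  have -> : (j == i + T)%N = false.
    by apply/negbTE; rewrite neq_ltn (leq_ltn_trans hji) // addnS ltnS leq_addr.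
  have hd : (T %| i - j)%N by rewrite -eqn_mod_dvd.
  rewrite -addnBAC // divnDr ?dvdnn // divnn /= addn1 exprS subrr oppr0 //.
rewrite mulr0 sub0r.
case: (eqVneq j (i + T)%N) => [->|hne].
  by rewrite leqnn modnDr eqxx subnn div0n expr0.
case: (boolP ((j <= i + T) && (i %% T == j %% T))%N) => [/andP [h1 h2]|]; last by rewrite oppr0.
exfalso; move: hA; rewrite h2 andbT -ltnNge => hij.
have hd : (T %| j - i)%N by rewrite -eqn_mod_dvd ?(ltnW hij) // eq_sym.
have := dvdn_leq _ hd; rewrite subn_gt0 hij => /(_ isT).
rewrite leq_subRL ?(ltnW hij) // addnC => hle.
by move: hne; rewrite eqn_leq h1 addnC hle.
Qed.

Lemma uf_mod (k r : nat) : (r < T)%N ->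
  uf k r = if (k %% T == r)%N then 'X^(k %/ T) else 0.
Proof.
move=> hr; rewrite /uf (modn_small hr).
case: eqP => [<-|_]; last by rewrite andbF.
rewrite leq_mod ?eqxx /=; congr ('X^ _).
by rewrite {1}(divn_eq k T) addnK mulnK.
Qed.

Local Notation J := (Jmat N T a mu).
Local Notation M := (char_poly_mx J).
Definition Kmx := Lmx *m M *m Umx.

Lemma ebasU k (hk : (k < n)%N) j : (ebas n k *m Umx) 0 j = uf k j.
Proof. by rewrite ebas_mul mxE. Qed.

Lemma ebasM (i : 'I_n) : ebas n i *m M = 'X *: ebas n i - map_mx (@polyC R) (row i J).
Proof.
apply/matrixP => z j; rewrite ord1 (ebas_mul _ (ltn_ord i)).
rewrite !mxE.
have -> : Ordinal (ltn_ord i) = i by apply/val_inj.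
congr (_ - _).
case: (eqVneq i j) => [->|h]; first by rewrite eqxx mulr1n mulr1.
rewrite mulr0n.
have -> : (j == i :> nat) = false.
  by apply/negbTE; apply: contra h => /eqP e; apply/eqP/val_inj.
by rewrite mulr0.
Qed.

Lemma rowJ (i : 'I_n) : row i J =
  if (i <= s)%N then ebas n (i + T) else rvec N T a mu (i - s).
Proof. by rewrite /Jmat rowK !subSS subn0. Qed.

Lemma rowL (i : 'I_n) : row i Lmx =
  ebas n i - (if (s < i)%N then cL i *: ebas n i.-1 else 0).
Proof.
apply/matrixP => z j; rewrite ord1 !mxE eq_sym.
case hs: (s < i)%N => /=; first last.
  by rewrite mxE !subr0; case: (j == i :> nat).
rewrite !mxE.
have -> : (j.+1 == i :> nat) = (j == i.-1 :> nat).
  by case: (nat_of_ord i) hs => [|i'] //= _.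
by case: (j == i.-1 :> nat); case: (j == i :> nat); rewrite ?mulr1 ?mulr0.
Qed.

Lemma nT : n = (s + T).+1.
Proof. by rewrite /dimJ subSS subn0 mulSn addnC. Qed.

Lemma K_top (i : 'I_n) j : (i <= s)%N -> Kmx i j = - ((j == (i + T)%N :> nat)%:R).
Proof.
move=> hi.
have hiT : (i + T < n)%N.
  by rewrite [X in (_ < X)%N]nT ltnS leq_add2r.
have -> : Kmx i j = row i Kmx 0 j.
  by rewrite [RHS]mxE.
rewrite /Kmx !row_mul rowL.
by rewrite ltnNge hi subr0 ebasM rowJ hi map_ebas mulmxBl -scalemxAl mxE mxE [X in _ + X]mxE (ebasU (ltn_ord i)) (ebasU hiT) uf_top.
Qed.

Definition Ssum (m' : nat) : 'rV[RX]_n :=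
  \sum_(2 <= l < N.+1) (a l)%:P *: ebas n ((N - l) * T + m'.+1 - 1).

Lemma rowJprev m' (i : 'I_n) : (i : nat) = (s + m')%N -> row i J = rvec N T a mu m'.
Proof.
move=> hi; rewrite rowJ hi.
case: m' hi => [|m'] hi.
  by rewrite addn0 leqnn /= subSS subn0 mulSn addnC.
have -> : (s + m'.+1 <= s)%N = false by rewrite leqNgt addnS ltnS leq_addr.
by rewrite addKn.
Qed.

Lemma rowLM (i : 'I_n) m' : (i : nat) = (s + m'.+1)%N ->
  row i (Lmx *m M) = 'X *: ebas n i - cL i *: ('X *: ebas n i.-1)
     - (mu m'.+1)%:P *: Ssum m'.
Proof.
move=> hi.
have hp : (i.-1 < n)%N by rewrite (leq_ltn_trans (leq_pred _)).
have hs : (s < i)%N by rewrite hi addnS ltnS leq_addr.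
rewrite row_mul rowL hs mulmxBl -scalemxAl ebasM.
rewrite (ebasM (Ordinal hp)) (@rowJprev m' (Ordinal hp)); last by rewrite /= hi addnS.
rewrite rowJ leqNgt hs /= hi addKn.
rewrite /= !map_mxZ map_mxD !map_mxZ map_mx_sum.
under eq_bigr do rewrite map_mxZ map_ebas.
rewrite /cL addKn polyCM /Ssum /=.
set V := (rvec N T a mu m' ^ _)%sesqui.
set S := \sum_(_ <= _ < _) _.
apply/matrixP => z j; rewrite !mxE.
ring.
Qed.

Lemma ebasUr k (hk : (k < n)%N) : ebas n k *m Umx = \row_j uf k j.
Proof. by apply/matrixP => z j; rewrite ord1 (ebasU hk) mxE. Qed.

Definition Pp : RX := \sum_(1 <= l < N.+1) a l *: 'X^(N - l).

Lemma PpE : Pp = (a 1)%:P * 'X^(N'.+1) + \sum_(2 <= l < N.+1) (a l)%:P * 'X^(N - l).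
Proof.
rewrite /Pp big_ltn // mul_polyC; congr (_ + _).
by apply: eq_bigr => l _; rewrite mul_polyC.
Qed.

Lemma K_bot (ib : 'I_n) m' (r : 'I_n) : (ib : nat) = (s + m'.+1)%N -> (m' < T)%N -> (r < T)%N ->
  Kmx ib r = (if (r == m'.+1 %% T :> nat)%N then 'X^(N'.+1 + m'.+1 %/ T) else 0)
           + (if (r == m' :> nat) then - ((mu m'.+1)%:P * Pp) else 0).
Proof.
move=> hi hm hr.
have hp : (ib.-1 < n)%N by rewrite (leq_ltn_trans (leq_pred _)).
have -> : Kmx ib r = row ib Kmx 0 r by rewrite [RHS]mxE.
rewrite /Kmx row_mul (rowLM hi) !mulmxBl -!scalemxAl /Ssum mulmx_suml.
rewrite (ebasUr (ltn_ord ib)) (ebasUr hp).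
rewrite (@eq_big_nat _ _ _ _ _ _ (fun l => (a l)%:P *: \row_j uf ((N - l) * T + m'.+1 - 1) j)); last first.
  move=> l /andP [h1 h2]; rewrite -scalemxAl ebasUr //.
  rewrite addnS subn1 /= [X in (_ < X)%N]nT ltnS leq_add //; last by rewrite ltnW.
  by rewrite leq_mul2r leq_subLR addnC -addn2 leq_add2l h1 orbT.
rewrite !mxE summxE.
under eq_bigr do rewrite !mxE.
have hT0 : (0 < T)%N by [].
rewrite !(uf_mod _ hr) hi modnMDl divnMDl //.
have -> : ((s + m'.+1).-1 = s + m')%N by rewrite addnS.
rewrite modnMDl divnMDl // (modn_small hm) (divn_small hm) addn0.
rewrite (@eq_big_nat _ _ _ _ _ _ (fun i => (a i)%:P * (if (m' == r :> nat) then 'X^(N - i) else 0))); last first.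
  move=> l _; rewrite uf_mod // addnS subn1 /= modnMDl divnMDl // (modn_small hm) (divn_small hm) addn0.
  by [].
rewrite /cL addKn polyCM PpE [in RHS]eq_sym (eq_sym m').
case: (eqVneq (r : nat) (m'.+1 %% T)%N) => [_|_]; last rewrite mulr0 add0r.
  case: (eqVneq (r : nat) m') => [_|_].
    rewrite !addSn !exprS; ring.
  rewrite big1 ?mulr0 ?subr0 ?addr0; last by move=> *; rewrite mulr0.
  by rewrite -exprS addSn.
case: (eqVneq (r : nat) m') => [_|_].
  rewrite exprS; ring.
by rewrite big1 => [|*]; rewrite ?mulr0 ?oppr0 ?subr0 ?addr0.
Qed.

End Main.

Theorem theorem1 (R : realFieldType) (N T : nat) (a mu : nat -> R) :
  (2 <= N)%N -> (1 <= T)%N ->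
  \sum_(1 <= l < N.+1) a l = 1 ->
  char_poly (Jmat N T a mu) =
    'X^(dimJ N T)
    - (\prod_(1 <= m < T.+1) mu m)%:P
      * (\sum_(1 <= l < N.+1) a l *: 'X^(N - l)) ^+ T.
Proof.
case: N => [|[|N']] // _; case: T => [|t] // _ _.
have hTn : (t.+1 <= dimJ N'.+2 t.+1)%N by rewrite nT ltnW // ltnS leq_addl.
have -> : char_poly (Jmat N'.+2 t.+1 a mu) = \det (Kmx N' t a mu).
  by rewrite /Kmx !det_mulmx det_Lmx det_Umx mul1r mulr1.
rewrite (shape_n hTn); last first.
  move=> i j hi; apply: K_top; move: hi; rewrite [X in (_ < X - _)%N]nT.
  by rewrite subSn ?leq_addl // addnK ltnS.
set d := fun i => - ((mu i.+1)%:P * Pp N' a).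
set sv := fun i : nat => ('X^(N'.+1 + i.+1 %/ t.+1) : {poly R}).
have -> : (\matrix_(i < t.+1, j < t.+1) Kmx N' t a mu (botr hTn i) (widen_ord hTn j))
          = cycmx t d sv.
  apply/matrixP => i j; rewrite [LHS]mxE [RHS]mxE (@K_bot _ _ _ _ _ _ i) //=.
  rewrite [X in (X - _ + _)%N]nT subSn ?leq_addl // addnK.
  by rewrite addSnnS.
rewrite (det_cyc t d sv).
have hd : \prod_(i < t.+1) d i =
    (-1) ^+ t.+1 * ((\prod_(1 <= m < t.+2) mu m)%:P * Pp N' a ^+ t.+1).
  rewrite /d prodrN card_ord big_split /= prodr_const card_ord rmorph_prod.
  by rewrite big_add1 /= big_mkord.
have hs : \prod_(i < t.+1) sv i = 'X^(dimJ N'.+2 t.+1).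
  rewrite big_ord_recr /= /sv divnn /=.
  rewrite (eq_bigr (fun _ => 'X^(N'.+1))); last first.
    by move=> i _; rewrite divn_small ?addn0 // ltnS ltn_ord.
  rewrite prodr_const card_ord -exprM -exprD; congr ('X^ _).
  by rewrite /dimJ subSS subn0 mulnS addn1 addnS addnC.
have hsg : (-1) ^+ ((dimJ N'.+2 t.+1 - t.+1) * t.+2) = (-1) ^+ t :> {poly R}.
  rewrite nT subSn ?leq_addl // addnK -signr_odd -(@signr_odd _ t) oddM /= oddM /=.
  by case: (odd t); case: (odd N').
rewrite hd hs hsg /Pp.
set u := (-1) ^+ t : {poly R}.
have hu : u * u = 1 by rewrite /u -exprD -signr_odd addnn odd_double.
rewrite exprS -/u.
set Q := (_ * _ ^+ t.+1).
have -> : u * (-1 * u * Q + u * 'X^(dimJ N'.+2 t.+1)) = (u * u) * ('X^(dimJ N'.+2 t.+1) - Q) by ring.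
by rewrite hu mul1r.
Qed.
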